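(* Let $p$ be a prime and let $G$ be a finite top $p$-group such that $Z(G)$ and $G/G'$ are elementary abelian. Then $G$ is the direct product of a special $p$-group and an abelian group.
   Context: For a group $H$, $H'$ denotes its commutator subgroup and $Z(H)$ its center. A finite group $G$ is top if $|H/H'| < |G/G'|$ for every proper subgroup $H<G$. A finite $p$-group $P$ is special if $P' = Z(P) = \Phi(P)$, where $\Phi(P)$ is the Frattini subgroup of $P$. *)

(* Defs.v *)
From mathcomp Require Import all_boot all_fingroup all_solvable.
Set Implicit Arguments. Unset Strict Implicit. Unset Printing Implicit Defensive.
Local Open Scope group_scope.

Definition top_group (gT : finGroupType) (G : {group gT}) : Prop :=
  forall H : {group gT}, H \proper G -> #|H / H^`(1)| < #|G / G^`(1)|.

Definition special_pgroup (gT : finGroupType) (p : nat) (P : {group gT}) : Prop :=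
  [/\ p.-group P, P^`(1) = 'Z(P) & 'Z(P) = 'Phi(P)].

(* Main.v *)
Require Import Defs.
From mathcomp Require Import all_boot all_fingroup all_solvable.
Set Implicit Arguments. Unset Strict Implicit. Unset Printing Implicit Defensive.
Local Open Scope group_scope.

Lemma index_capI (gT : finGroupType) (G A B : {group gT}) :
  A \subset G -> B \subset G -> #|G : A :&: B| <= #|G : A| * #|G : B|.
Proof.
move=> sAG sBG.
rewrite -(Lagrange_index sAG (subsetIl A B)) leq_mul2l; apply/orP; right.
rewrite indexgI -(leq_pmul2r (cardG_gt0 B)) LagrangeMr mulnC (Lagrange sBG).
by apply: subset_leq_card; rewrite mulG_subG sAG.
Qed.

Lemma count_cent (gT : finGroupType) (p : nat) (G D C3 : {group gT}) :
  p.-group G -> D \subset G -> [~: D, G] \subset C3 -> #|C3| = p ->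
  forall Y : {group gT}, Y \subset D ->
  #|G : 'C_G(Y)| <= #|Y : Y :&: 'Z(G)|.
Proof.
move=> pG sDG sC3 cardC3 Y.
elim: {Y}_.+1 {-2}Y (ltnSn #|Y|) => // n IHn Y leYn sYD.
have sYG : Y \subset G := subset_trans sYD sDG.
have pY : p.-group Y := pgroupS sYG pG.
case: (boolP (Y \subset 'Z(G))) => sYZ.
  have -> : 'C_G(Y) = G.
    apply/setIidPl; rewrite centsC; apply: subset_trans sYZ _.
    exact: subsetIr.
  by rewrite indexgg indexg_gt0.
have prYZ : (Y :&: 'Z(G))%G \proper Y.
  rewrite properEneq subsetIl andbT; apply: contra sYZ => /eqP <-.
  exact: subsetIr.
have [M maxM sYZM] := @maxgroup_exists _ (fun M : {group gT} => M \proper Y) _ prYZ.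
have maxM' : maximal M Y := maxM.
have prMY : M \proper Y := maxgroupp maxM.
have sMY : M \subset Y := proper_sub prMY.
have [_ [y Yy My]] := properP prMY.
have sYMy : Y \subset M <*> <[y]>.
  case: (boolP ((M <*> <[y]>)%G \proper Y)) => H.
    have := (maxgroupP maxM).2 _ H (joing_subl _ _) => EM.
    by case/negP: My; rewrite -EM /= mem_gen // inE cycle_id orbT.
  move: H; rewrite properE join_subG sMY cycle_subG Yy /= negbK.
  by [].
have EMZ : M :&: 'Z(G) = Y :&: 'Z(G).
  apply/eqP; rewrite eqEsubset setSI // subsetI sYZM subsetIr andbT.
  by [].
have IH := IHn M (leq_trans (proper_card prMY) leYn) (subset_trans sMY sYD).
have sub : 'C_G(M) :&: 'C_G[y] \subset 'C_G(Y).
  rewrite subsetI subIset ?subsetIl //=.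
  apply: subset_trans (centS sYMy); rewrite centY -cent_cycle.
  apply/subsetP=> x; rewrite !inE => /andP[/andP[_ ->]] /andP[_ ->] //.
have cy : #|G : 'C_G[y]| <= p.
  rewrite index_cent1 -cardC3 -(card_lcoset C3 y); apply: subset_leq_card.
  apply/subsetP=> x /imsetP[g Gg ->]; rewrite conjg_mulR mem_lcoset mulKg.
  by apply: (subsetP sC3); apply: mem_commg => //; apply: (subsetP sYD).
apply: leq_trans (dvdn_leq (indexg_gt0 _ _) (indexgS G sub)) _.
apply: leq_trans (index_capI (subsetIl _ _) (subsetIl _ _)) _.
rewrite -(Lagrange_index sMY sYZM) (p_maximal_index pY maxM') mulnC; rewrite EMZ in IH.
exact: leq_mul.
Qed.

Lemma classA (gT : finGroupType) (p : nat) (G : {group gT}) :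
  prime p -> p.-group G -> top_group G ->
  #|[~: G^`(1), G]| = p -> [~: [~: G^`(1), G], G] = 1 -> False.
Proof.
move=> pr pG topG cardC3 C3c.
set D := G^`(1).
have sDG : D \subset G := der_sub 1 G.
have abD : [~: D, D] = 1.
  have h := @three_subgroup _ G D G.
  rewrite /D derg1 in h *; apply: h.
    by rewrite (commGC G) -derg1.
  by rewrite -derg1.
pose K := 'C_G(D)%G.
have sKG : K \subset G := subsetIl _ _.
have sDK : D \subset K.
  by rewrite subsetI sDG; apply/commG1P.
have cKD : K \subset 'C(D) := subsetIr _ _.
have KZ : K^`(1) \subset 'Z(G).
  have h : [~: K, K, G] = 1.
    apply: (@three_subgroup _ K G K).
      apply/commG1P; apply: subset_trans (commgSS sKG (subxx G)) _.
      rewrite -derg1 centsC; exact: subsetIr.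
    apply/commG1P; rewrite (commGC G K) centsC; apply: subset_trans cKD (centS _); rewrite /D derg1; exact: commgSS sKG (subxx G).
  rewrite subsetI (subset_trans (dergS 1 sKG) (der_sub 1 G)) /=.
  by rewrite derg1; apply/commG1P.
have prK : K \proper G.
  rewrite properEneq sKG andbT; apply/eqP => EK.
  have : [~: D, G] = 1.
    apply/commG1P; rewrite -EK centsC; exact: subsetIr.
  move=> h; move: cardC3; rewrite h cards1 => p1.
  by rewrite -p1 in pr.
have := topG _ prK.
rewrite !card_quotient ?der_norm //.
rewrite -(Lagrange_index sKG sDK) -(Lagrange_index sDK (dergS 1 sKG)).
rewrite [X in _ < X]mulnC ltn_mul2l indexg_gt0 /= ltnNge; move/negP; apply.
have KZD : K^`(1) \subset D :&: 'Z(G) by rewrite subsetI KZ dergS.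
apply: leq_trans (count_cent pG sDG (subxx _) cardC3 (subxx D)) _.
exact: dvdn_leq (indexg_gt0 _ _) (indexgS D KZD).
Qed.

Lemma top_quotient (gT : finGroupType) (G N : {group gT}) :
  N <| G -> N \subset G^`(1) -> top_group G -> top_group (G / N).
Proof.
move=> nNG sND topG Hb prHb.
have nN := normal_norm nNG.
have [H EH sNH sHG] := inv_quotientS nNG (proper_sub prHb).
have nNH : H \subset 'N(N) := subset_trans sHG nN.
have prH : H \proper G.
  by rewrite -(quotient_proper (normalS sNH sHG nNG) nNG) -EH.
have := topG _ prH.
have E1 : #|Hb / Hb^`(1)| = #|H / N : H^`(1) / N|.
  rewrite card_quotient ?der_norm // /=; rewrite EH -quotient_der //.
have E2 : #|(G / N) / (G / N)^`(1)| = #|G / N : G^`(1) / N|.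
  by rewrite card_quotient ?der_norm // /= -quotient_der.
rewrite E1 E2 !card_quotient ?der_norm //.
move=> lt.
rewrite [X in _ < X]index_quotient_eq //; last exact: der_sub; last first.
  by rewrite setIC (setIidPl (normal_sub nNG)).
apply: leq_ltn_trans lt.
apply: dvdn_leq (indexg_gt0 _ _) _.
by apply: index_quotient; apply: subset_trans (subsetIl _ _) nNH.
Qed.

Lemma class2 (gT : finGroupType) (p : nat) (G : {group gT}) :
  prime p -> p.-group G -> top_group G -> [~: G^`(1), G] = 1.
Proof.
move=> pr pG topG; apply/eqP; apply/negPn/negP => ntC3.
pose C3 := [~: G^`(1), G]%G.
have sC3D : C3 \subset G^`(1) by rewrite commg_subl der_norm.
have sC3G : C3 \subset G := subset_trans sC3D (der_sub 1 G).
have nC3 : C3 <| G by rewrite /normal sC3G commg_normr.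
have pC3 : p.-group C3 := pgroupS sC3G pG.
pose k := logn p #|C3|.
have cC3 : #|C3| = (p ^ k)%N := card_pgroup pC3.
have k0 : 0 < k.
  rewrite lt0n; apply: contra ntC3 => /eqP k0.
  by rewrite trivg_card1 /= cC3 k0.
have [N [sNC3 nNG cardN]] := normal_pgroup pG nC3 (leq_pred k).
have iN : #|C3 : N| = p.
  have := Lagrange sNC3; rewrite cardN cC3 -(prednK k0) expnS mulnC.
  by move/eqP; rewrite eqn_pmul2r ?expn_gt0 ?prime_gt0 //; move/eqP.
have nN := normal_norm nNG.
have topGb := top_quotient nNG (subset_trans sNC3 sC3D) topG.
have pGb : p.-group (G / N) := quotient_pgroup N pG.
have EC : [~: (G / N)^`(1), G / N] = C3 / N.
  by rewrite -quotient_der // -quotientR // (subset_trans (der_sub 1 G) nN).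
have cardCb : #|C3 / N| = p by rewrite card_quotient // (subset_trans sC3G nN).
apply: (classA pr pGb topGb); rewrite EC //.
apply/commG1P.
have nCb : C3 / N <| G / N := quotient_normal N nC3.
have ntCb : C3 / N != 1 :> {set _}.
  by rewrite trivg_card1 cardCb; apply/eqP => p1; rewrite p1 in pr.
have := meet_center_nil (pgroup_nil pGb) nCb ntCb.
have [sZ | nsZ] := boolP (C3 / N \subset 'Z(G / N)).
  by move=> _; apply: subset_trans sZ (subsetIr _ _).
by rewrite (prime_TIg _ nsZ) ?eqxx // cardCb.
Qed.

Theorem lemma3p2 (gT : finGroupType) (p : nat) (G : {group gT}) :
  prime p -> p.-group G -> top_group G ->
  p.-abelem 'Z(G) -> p.-abelem (G / G^`(1)) ->
  exists S A : {group gT},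
    [/\ S \x A = G, special_pgroup p S & abelian A].
Proof.
move=> pr pG topG abZ abQ.
set D := G^`(1).
have cDG : D \subset 'C(G) by apply/commG1P; exact: class2 pr pG topG.
have sDG : D \subset G := der_sub 1 G.
have nDG : D <| G := der_normal 1 G.
have nD := normal_norm nDG.
have sDZ : D \subset 'Z(G) by rewrite subsetI sDG.
pose W := ('Z(G) :&: D)%G.
have [A WA] := abelem_split_dprod abZ (subsetIl _ _ : W \subset 'Z(G)).
have [_ EZ _ tiWA] := dprodP WA.
have sAZ : A \subset 'Z(G) by rewrite -EZ mulG_subr.
have sAG : A \subset G := subset_trans sAZ (center_sub G).
have cAG : A \subset 'C(G) := subset_trans sAZ (subsetIr _ _).
have tiAD : A :&: D = 1.
  apply/trivgP; rewrite -tiWA subsetI subsetIl andbT.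
  by rewrite /= subsetI subsetIr (subset_trans (subsetIl _ _) sAZ).
have [Cb ACb] := abelem_split_dprod abQ (quotientS D sAG).
have [_ EQ _ tiACb] := dprodP ACb.
have sCbQ : Cb \subset G / D by rewrite -EQ mulG_subr.
have [S ECb sDS sSG] := inv_quotientS nDG sCbQ.
have cAS : A \subset 'C(S) := subset_trans cAG (centS sSG).
have tiSA : S :&: A = 1.
  apply/trivgP; rewrite -tiAD subsetI subsetIr /=.
  rewrite -quotient_sub1; last by apply: subset_trans (subsetIl _ _) (subset_trans sSG nD).
  by apply: subset_trans (quotientI _ _ _) _; rewrite -ECb setIC tiACb.
have ESA : S * A = G.
  apply/eqP; rewrite eqEsubset mulG_subG sSG sAG /=.
  rewrite -(mulSGid sDS) -mulgA -quotientSK //.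
  rewrite quotientMl ?(subset_trans sSG nD) // -ECb -EQ.
  have cACb : A / D \subset 'C(Cb) by rewrite ECb quotient_cents.
  by rewrite (centC cACb).
have SA : S \x A = G by rewrite dprodE // ESA.
have abA : abelian A := abelianS sAZ (center_abelian G).
have pS : p.-group S := pgroupS sSG pG.
have ESD : S^`(1) = D.
  have := der_dprod 1 SA; rewrite (derG1P abA) dprodg1.
  by move=> h; rewrite h.
have ZSD : 'Z(S) \subset D.
  have [_ EZG _ _] := dprodP (center_dprod SA).
  have sZS : 'Z(S) \subset 'Z(G) :&: S.
    by rewrite subsetI -EZG mulG_subl center_sub.
  apply: subset_trans sZS _.
  rewrite -EZ -group_modl; last exact: subset_trans (subsetIr _ _) sDS.
  by rewrite setIC tiSA mulg1 subsetIr.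
have DZS : D \subset 'Z(S) by rewrite subsetI sDS (subset_trans cDG (centS sSG)).
have EZS : 'Z(S) = D by apply/eqP; rewrite eqEsubset ZSD DZS.
exists S, A; split=> //; split=> //; first by rewrite ESD EZS.
apply/eqP; rewrite eqEsubset EZS; apply/andP; split.
  by rewrite -{1}ESD (Phi_joing pS) joing_subl.
rewrite -ESD; apply: Phi_min pS (der_norm 1 S) _.
have ESDg : (S^`(1))%G = (G^`(1))%G by apply: val_inj; exact: ESD.
by rewrite ESDg -ECb (abelemS sCbQ abQ).
Qed.
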